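(* For $t=3$ topics, $r_3 = \frac{5}{6}$.
   Context: Let $t$ be a positive integer (the number of topics). A voter matrix with $t$ topics is a matrix $V\in\{Y,N\}^{n\times t}$ for some positive integer $n$ (rows are voters), subject to the standing assumption that in every column the number of entries $Y$ is at least the number of entries $N$. $\mathcal{V}_t$ is the set of all voter matrices with $t$ topics and any number of voters. A proposal is a vector $p\in\{Y,N\}^t$. A voter $v$ supports $p$ if the Hamming distance between $v$ and $p$ is at most $t/2$; $p$ is supported by $V$ if at least $n/2$ rows of $V$ support $p$. For $i=1,\dots,t$ let $m_i$ be the fraction of entries $Y$ in column $i$ of $V$, and $m_V=\frac1t\sum_i m_i$. For a proposal $p$ let $m_i'=m_i$ if $p_i=Y$ and $m_i'=1-m_i$ if $p_i=N$; set $R_p=\frac1t\sum_i m_i'$ and $r_p=R_p/m_V$. Let $r_V=\max r_p$, the maximum over all proposals $p$ supported by $V$, and $r_t=\inf_{V\in\mathcal{V}_t} r_V$. *)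

(* Defs.v *)
From HB Require Import structures.
From mathcomp Require Import all_boot all_order all_algebra.
From mathcomp Require Import boolp classical_sets reals.
Set Implicit Arguments. Unset Strict Implicit. Unset Printing Implicit Defensive.
Import Order.TTheory GRing.Theory Num.Theory.
Local Open Scope ring_scope.
Local Open Scope classical_set_scope.

(* Entries: true = Y, false = N.  A matrix V : 'M[bool]_(n, t) has n voters (rows)
   and t topics (columns); a proposal is p : {ffun 'I_t -> bool}. *)
Section Voting.
Variables (R : realType) (t n : nat) (V : 'M[bool]_(n, t)).

Definition countY (j : 'I_t) : nat := #|[set i : 'I_n | V i j]|.
Definition countN (j : 'I_t) : nat := #|[set i : 'I_n | ~~ V i j]|.

Definition is_voter_matrix : bool :=
  (0 < n)%N && [forall j : 'I_t, (countN j <= countY j)%N].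

Definition hamming (i : 'I_n) (p : {ffun 'I_t -> bool}) : nat :=
  #|[set j : 'I_t | V i j != p j]|.

Definition supports (i : 'I_n) (p : {ffun 'I_t -> bool}) : bool :=
  (2 * hamming i p <= t)%N.

Definition supported (p : {ffun 'I_t -> bool}) : bool :=
  (n <= 2 * #|[set i : 'I_n | supports i p]|)%N.

Definition m_col (j : 'I_t) : R := (countY j)%:R / n%:R.
Definition m_V : R := (\sum_(j < t) m_col j) / t%:R.
Definition R_p (p : {ffun 'I_t -> bool}) : R :=
  (\sum_(j < t) (if p j then m_col j else 1 - m_col j)) / t%:R.
Definition r_p (p : {ffun 'I_t -> bool}) : R := R_p p / m_V.

(* maximum of r_p over the supported proposals (a nonempty finite set:
   p or its complement is always supported; all r_p are >= 0). *)
Definition r_V : R := \big[Num.max/0]_(p : {ffun 'I_t -> bool} | supported p) r_p p.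
End Voting.

Definition r_t (R : realType) (t : nat) : R :=
  inf [set x : R | exists (n : nat) (V : 'M[bool]_(n, t)),
                     is_voter_matrix V /\ x = r_V R V].

(* Main.v *)
Set Warnings "-notation-overridden,-ambiguous-paths".
Require Import Defs.
From HB Require Import structures.
From mathcomp Require Import all_boot all_order all_algebra.
From mathcomp Require Import boolp classical_sets reals.
From mathcomp Require Import zify ring lra.
Set Implicit Arguments. Unset Strict Implicit. Unset Printing Implicit Defensive.
Import Order.TTheory GRing.Theory Num.Theory.
Definition o0 : 'I_3 := @Ordinal 3 0 isT.
Definition o1 : 'I_3 := @Ordinal 3 1 isT.
Definition o2 : 'I_3 := @Ordinal 3 2 isT.

Lemma forall3 (P : 'I_3 -> Prop) : P o0 -> P o1 -> P o2 -> forall j, P j.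
Proof.
move=> h0 h1 h2 [[|[|[|m]]] Hm] //.
- by have -> : Ordinal Hm = o0 by apply/val_inj.
- by have -> : Ordinal Hm = o1 by apply/val_inj.
- by have -> : Ordinal Hm = o2 by apply/val_inj.
Qed.

Lemma sum3 (M : nmodType) (F : 'I_3 -> M) :
  (\sum_(j < 3) F j = F o0 + F o1 + F o2)%R.
Proof.
rewrite !big_ord_recl big_ord0 GRing.addr0 GRing.addrA.
congr (F _ + F _ + F _)%R; exact/val_inj.
Qed.

Lemma sum3n (F : 'I_3 -> nat) :
  (\sum_(j < 3) F j = F o0 + F o1 + F o2)%N.
Proof.
rewrite !big_ord_recl big_ord0 addn0 addnA.
congr (F _ + F _ + F _)%N; exact/val_inj.
Qed.

Lemma in_cset (T : finType) (P : pred T) x : (x \in [set y | P y]%classic) = P x.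
Proof. by apply/idP/idP => [/set_mem|/mem_set]. Qed.

Lemma ccard (T : finType) (P : pred T) : #|[set i | P i]%classic| = #|[set i | P i]|.
Proof. by apply: eq_card => i; rewrite in_cset inE. Qed.

Lemma cardsum (T : finType) (P : pred T) : #|[set i | P i]| = (\sum_i (P i : nat))%N.
Proof.
rewrite -sum1_card big_mkcond /=; apply: eq_bigr => i _; rewrite inE; by case: (P i).
Qed.

Definition sel (j : 'I_3) (a b c : bool) := nth false [:: a; b; c] j.

Definition cnt (x : bool -> bool -> bool -> nat) (P : bool -> bool -> bool -> bool) : nat :=
  (P true true true * x true true true + P true true false * x true true false +
   P true false true * x true false true + P true false false * x true false false +
   P false true true * x false true true + P false true false * x false true false +
   P false false true * x false false true + P false false false * x false false false)%N.

Definition D1 (a' b' c' a b c : bool) : bool :=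
  ((a' == a) && (b' == b)) || ((a' == a) && (c' == c)) || ((b' == b) && (c' == c)).

Definition prop (a b c : bool) : {ffun 'I_3 -> bool} := [ffun j => sel j a b c].

Lemma prop_eta (p : {ffun 'I_3 -> bool}) : p = prop (p o0) (p o1) (p o2).
Proof. by apply/ffunP; apply: forall3; rewrite ffunE. Qed.

Section General.
Variables (n : nat) (V : 'M[bool]_(n, 3)).

Definition xc a b c := #|[set i : 'I_n | (V i o0 == a) && (V i o1 == b) && (V i o2 == c)]|.

Lemma card_P (P : bool -> bool -> bool -> bool) :
  #|[set i : 'I_n | P (V i o0) (V i o1) (V i o2)]| = cnt xc P.
Proof.
rewrite /cnt /xc !cardsum !bigop.big_distrr /= -!bigop.big_split /=.
apply: eq_bigr => i _.
by case: (V i o0); case: (V i o1); case: (V i o2); rewrite /= !muln0 !muln1 ?addn0 ?add0n.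
Qed.

Lemma Vsel i j : V i j = sel j (V i o0) (V i o1) (V i o2).
Proof. by move: j; apply: forall3. Qed.

Lemma countY_cnt j : countY V j = cnt xc (fun a b c => sel j a b c).
Proof.
rewrite -card_P /countY ccard; apply: eq_card => i; rewrite !inE; exact: Vsel.
Qed.

Lemma countN_cnt j : countN V j = cnt xc (fun a b c => ~~ sel j a b c).
Proof.
rewrite -card_P /countN ccard; apply: eq_card => i; rewrite !inE Vsel //.
Qed.

Lemma n_cnt : n = cnt xc (fun _ _ _ => true).
Proof.
rewrite -card_P.
by rewrite cardsum (eq_bigr (fun=> 1%N)) // sum1_card card_ord.
Qed.

Lemma countYN j : (countY V j + countN V j = n)%N.
Proof.
rewrite /countY /countN !ccard.
have -> : [set i : 'I_n | ~~ V i j] = ~: [set i | V i j] by apply/setP => i; rewrite !inE.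
by rewrite cardsC card_ord.
Qed.

Lemma card3 (Q : pred 'I_3) : #|[set j | Q j]| = (Q o0 + Q o1 + Q o2)%N.
Proof. by rewrite cardsum sum3n. Qed.

Lemma supports_D1 i a b c :
  supports V i (prop a b c) = D1 (V i o0) (V i o1) (V i o2) a b c.
Proof.
rewrite /supports /hamming ccard card3 !ffunE /sel /=.
by case: (V i o0); case: (V i o1); case: (V i o2); case: a; case: b; case: c.
Qed.

Lemma supported_cnt a b c :
  supported V (prop a b c) = (n <= 2 * cnt xc (fun a' b' c' => D1 a' b' c' a b c))%N.
Proof.
rewrite /supported; congr (_ <= 2 * _)%N; rewrite -card_P ccard; apply: eq_card => i.
by rewrite !inE supports_D1.
Qed.

End General.
Definition Ys x j := cnt x (fun a b c => sel j a b c).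
Definition Ns x j := cnt x (fun a b c => ~~ sel j a b c).
Definition good x (n : nat) (a b c : bool) : Prop :=
  (n <= 2 * cnt x (fun a' b' c' => D1 a' b' c' a b c))%N /\
  (5 * (Ys x o0 + Ys x o1 + Ys x o2) <=
   6 * ((if a then Ys x o0 else Ns x o0) + (if b then Ys x o1 else Ns x o1)
        + (if c then Ys x o2 else Ns x o2)))%N.

Lemma arith x n : n = cnt x (fun _ _ _ => true) -> (0 < n)%N ->
  (forall j, Ns x j <= Ys x j)%N -> exists a b c, good x n a b c.
Proof.
move=> hn hn0 hj; have h0 := hj o0; have h1 := hj o1; have h2 := hj o2.
have : good x n true true true \/ good x n true true false \/ good x n true false true \/
  good x n true false false \/ good x n false true true \/ good x n false true false \/
  good x n false false true \/ good x n false false false.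
  rewrite /good /Ys /Ns /cnt /D1 /sel /= in hn h0 h1 h2 *; lia.
case=> [h|[h|[h|[h|[h|[h|[h|h]]]]]]]; by do 3 eexists; exact: h.
Qed.

Lemma Ypos n (V : 'M[bool]_(n, 3)) : is_voter_matrix V -> (0 < countY V o0)%N.
Proof.
case/andP => hn /forallP /(_ o0) h; have := countYN V o0; lia.
Qed.

Lemma r_p_formula (R : realType) n (V : 'M[bool]_(n, 3)) p : is_voter_matrix V ->
  r_p R V p = ((\sum_(j < 3) (if p j then countY V j else countN V j))%N%:R /
               (\sum_(j < 3) countY V j)%N%:R)%R.
Proof.
move=> hv; have hY := Ypos hv; move: (hv) => /andP [hn0 _].
have hn : (n%:R != 0 :> R)%R by rewrite pnatr_eq0 -lt0n.
have hB : ((\sum_(j < 3) countY V j)%N%:R != 0 :> R)%R.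
  by rewrite pnatr_eq0 sum3n -lt0n; lia.
have e : forall j, ((if p j then m_col R V j else 1 - m_col R V j) =
   (if p j then countY V j else countN V j)%:R / n%:R :> R)%R.
  move=> j; rewrite /m_col; case: (p j) => //.
  have := countYN V j; move/(congr1 (fun k => (k%:R : R)%R)); rewrite natrD => hh.
  rewrite -hh in hn *; field; exact: hn.
rewrite /r_p /R_p /m_V (eq_bigr _ (fun j _ => e j)) -mulr_suml -natr_sum.
rewrite /m_col -mulr_suml -natr_sum.
field; rewrite hB hn /=; split => //; by rewrite pnatr_eq0.
Qed.

Lemma lower (R : realType) n (V : 'M[bool]_(n, 3)) : is_voter_matrix V -> (5 / 6 <= r_V R V :> R)%R.
Proof.
move=> hv; move: (hv) => /andP [hn0 /forallP hc].
have [a [b [c [hs hr]]]] := arith (n_cnt V) hn0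
  (fun j => eq_ind _ (fun k => (k <= _)%N) (eq_ind _ (fun k => (_ <= k)%N) (hc j) _ (countY_cnt V j)) _ (countN_cnt V j)).
rewrite /Ys /Ns -!countY_cnt -!countN_cnt in hr.
have hs' : supported V (prop a b c) by rewrite supported_cnt.
rewrite /r_V; apply: (@bigmax_sup _ _ _ _ (prop a b c) _ _ _ hs').
rewrite r_p_formula // !sum3n !ffunE /sel /=.
have hY := Ypos hv.
rewrite ler_pdivlMr ?ltr0n; last by lia.
have : ((5 * (countY V o0 + countY V o1 + countY V o2))%:R <= (6 * ((if a then countY V o0 else countN V o0) + (if b then countY V o1 else countN V o1) + (if c then countY V o2 else countN V o2)))%:R :> R)%R by rewrite ler_nat.
rewrite !natrM; lra.
Qed.
Section Family.
Variable m : nat.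
Definition nF := (6 * m + 12)%N.
Definition cF := (m + 3)%N.
Definition ty (i : nat) : nat :=
  if (i < cF)%N then 1%N else if (i < 2 * cF)%N then 2%N else if (i < 3 * cF)%N then 3%N else 0%N.
Definition VF : 'M[bool]_(nF, 3) := \matrix_(i, j) ((ty i == 0%N) || (ty i == j.+1)).

Lemma tycard (Q : nat -> bool) :
  #|[set i : 'I_nF | Q (ty i)]| = (Q 1%N * cF + Q 2%N * cF + Q 3%N * cF + Q 0%N * (nF - 3 * cF))%N.
Proof.
rewrite cardsum -(big_mkord xpredT (fun i => (Q (ty i) : nat))).
rewrite (@big_cat_nat _ _ _ cF) /=; [|lia|rewrite /nF /cF; lia].
rewrite (@big_cat_nat _ _ _ (2 * cF) cF) /=; [|lia|rewrite /nF /cF; lia].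
rewrite (@big_cat_nat _ _ _ (3 * cF) (2 * cF)) /=; [|lia|rewrite /nF /cF; lia].
rewrite (@eq_big_nat _ _ _ 0 cF _ (fun _ => Q 1%N : nat)); last first.
  by move=> i /andP [_ h]; rewrite /ty h.
rewrite (@eq_big_nat _ _ _ cF (2 * cF) _ (fun _ => Q 2%N : nat)); last first.
  move=> i /andP [h1 h2]; rewrite /ty h2; have -> : (i < cF)%N = false by lia. by [].
rewrite (@eq_big_nat _ _ _ (2 * cF) (3 * cF) _ (fun _ => Q 3%N : nat)); last first.
  move=> i /andP [h1 h2]; rewrite /ty h2; have -> : (i < cF)%N = false by lia.
  by have -> : (i < 2 * cF)%N = false by lia.
rewrite (@eq_big_nat _ _ _ (3 * cF) nF _ (fun _ => Q 0%N : nat)); last first.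
  move=> i /andP [h1 h2]; rewrite /ty; have -> : (i < cF)%N = false by lia.
  have -> : (i < 2 * cF)%N = false by lia.
  by have -> : (i < 3 * cF)%N = false by lia.
rewrite !sum_nat_const_nat; lia.
Qed.

Definition Qabc (a b c : bool) (t : nat) : bool :=
  (((t == 0%N) || (t == 1%N)) == a) && (((t == 0%N) || (t == 2%N)) == b) &&
  (((t == 0%N) || (t == 3%N)) == c).

Lemma xcF a b c : xc VF a b c =
  (Qabc a b c 1%N * cF + Qabc a b c 2%N * cF + Qabc a b c 3%N * cF + Qabc a b c 0%N * (nF - 3 * cF))%N.
Proof.
rewrite -tycard /xc; apply: eq_card => i; rewrite !inE !mxE; reflexivity.
Qed.

Lemma VF_voter : is_voter_matrix VF.
Proof.
apply/andP; split; first by rewrite /nF; lia.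
apply/forallP; apply: forall3; rewrite countY_cnt countN_cnt /cnt !xcF /Qabc /sel /=;
 rewrite /nF /cF; lia.
Qed.

End Family.

Lemma frac_le (R : realType) (A B X Y : nat) : (0 < B)%N -> (0 < Y)%N -> (A * Y <= X * B)%N ->
  (A%:R / B%:R <= X%:R / Y%:R :> R)%R.
Proof.
move=> hB hY h.
rewrite ler_pdivrMr ?ltr0n // mulrAC ler_pdivlMr ?ltr0n // -!natrM ler_nat.
exact: h.
Qed.

Lemma upperF (R : realType) m : (r_V R (VF m) <= (5 * m + 9)%N%:R / (6 * m + 9)%N%:R :> R)%R.
Proof.
rewrite /r_V; apply: bigmax_le => [|p hp]; first by rewrite divr_ge0 ?ler0n.
rewrite (prop_eta p) in hp *; move: (p o0) (p o1) (p o2) hp => a b c.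
rewrite supported_cnt /cnt !xcF /Qabc /D1 => hs.
rewrite r_p_formula ?VF_voter //; apply: frac_le; first by rewrite sum3n; have := Ypos (VF_voter m); lia.
  by lia.
rewrite !sum3n !ffunE /sel /= !countY_cnt !countN_cnt /cnt !xcF /Qabc /sel.
move: hs; rewrite /nF /cF.
case: a; case: b; case: c => /= hs; nia.
Qed.

Local Open Scope ring_scope.

Theorem theorem5p5 (R : realType) : r_t R 3 = 5 / 6.
Proof.
rewrite /r_t.
match goal with |- inf ?S = _ => set E := S end.
have lbS : forall x, E x -> 5 / 6 <= x.
  by move=> x [n [V [hv ->]]]; exact: lower.
have memS : forall m, E (r_V R (VF m)).
  by move=> m; exists (nF m), (VF m); split => //; exact: VF_voter.
have hlb : has_lbound E by exists (5 / 6) => y /lbS.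
apply/eqP; rewrite eq_le; apply/andP; split; last first.
  apply: lb_le_inf; [by exists (r_V R (VF 0)) | exact: lbS].
rewrite leNgt; apply/negP => h.
set d := inf E - 5 / 6.
have hd : 0 < d by rewrite subr_gt0.
set m := Num.truncn (d^-1).
have hm := truncnS_gt (d^-1); rewrite -/m in hm.
have hinf : inf E <= r_V R (VF m) by exact: (ge_inf hlb (memS m)).
have hu := upperF R m.
have h1 : 1 < d * (m.+1)%:R.
  by move: hm; rewrite -[d^-1]mulr1 ltr_pdivrMl.
have h2 : inf E * (6 * m + 9)%N%:R <= (5 * m + 9)%N%:R.
  rewrite -ler_pdivlMr ?ltr0n; [lra | lia].
have hE : inf E = 5 / 6 + d by rewrite /d; ring.
have e1 : (6 * m + 9)%N%:R = 6 * m%:R + 9 :> R by rewrite natrD natrM.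
have e2 : (5 * m + 9)%N%:R = 5 * m%:R + 9 :> R by rewrite natrD natrM.
rewrite hE e1 e2 in h2; rewrite -addn1 natrD in h1.
have hM : 0 <= d * m%:R by rewrite mulr_ge0 ?ler0n // ltW.
nra.
Qed.
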